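(* Let $\vec B_0$ be the oriented graph with vertex set $\{x_1,\dots,x_8\}$ and arcs $x_5x_4,\ x_6x_4,\ x_7x_4,\ x_4x_1,\ x_4x_2,\ x_4x_3,\ x_1x_2,\ x_2x_3,\ x_5x_6,\ x_6x_7$ and $x_8x_i$ for all $i\in\{1,\dots,7\}$. Then $\vec B_0$ is planar and $\chi_p([\vec B_0])=8$; more precisely, under any homomorphism of any presentation of $[\vec B_0]$ to any oriented graph, the eight vertices have pairwise distinct images.
   Context: An oriented graph is a directed graph with no loops and no pair of opposite arcs. A homomorphism of oriented graphs $\vec G\to\vec H$ is a vertex map sending every arc $uv$ to an arc $\varphi(u)\varphi(v)$. To push a vertex means to reverse all arcs incident with it; the push graph $[\vec G]$ is the set of oriented graphs obtainable from $\vec G$ by pushing some set of vertices (its presentations). The push chromatic number $\chi_p([\vec G])$ is the minimum number of vertices of an oriented graph $\vec H$ such that some presentation of $[\vec G]$ admits a homomorphism to $\vec H$. *)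

(* Defs.v *)
From HB Require Import structures.
From mathcomp Require Import all_boot all_order all_algebra.
Set Implicit Arguments. Unset Strict Implicit. Unset Printing Implicit Defensive.
Import Order.TTheory GRing.Theory Num.Theory.

Definition oriented (W : Type) (b : W -> W -> Prop) : Prop :=
  (forall x, ~ b x x) /\ (forall x y, b x y -> ~ b y x).

Definition or_hom (V W : Type) (a : V -> V -> Prop) (b : W -> W -> Prop)
  (phi : V -> W) : Prop :=
  forall u v, a u v -> b (phi u) (phi v).

(* Pushing the vertex set S: every arc with exactly one end in S is reversed.
   The presentations of [G] are exactly the push a S, S : {set V}. *)
Definition push (V : finType) (a : rel V) (S : {set V}) : rel V :=
  fun u v => if (u \in S) (+) (v \in S) then a v u else a u v.

Definition push_colorable (V : finType) (a : rel V) (k : nat) : Prop :=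
  exists (S : {set V}) (b : rel 'I_k) (phi : V -> 'I_k),
    oriented b /\ or_hom (push a S) b phi.

Definition is_push_chromatic_number (V : finType) (a : rel V) (n : nat) : Prop :=
  push_colorable a n /\ forall k, push_colorable a k -> (n <= k)%N.

Local Open Scope ring_scope.

Definition on_seg (R : realFieldType) (p q r : R * R) : Prop :=
  exists t : R, 0 <= t <= 1 /\
    p.1 = q.1 + t * (r.1 - q.1) /\ p.2 = q.2 + t * (r.2 - q.2).

Definition uedge (V : finType) (a : rel V) (u v : V) : bool := a u v || a v u.

Definition planar (R : realFieldType) (V : finType) (a : rel V) : Prop :=
  exists pos : V -> R * R,
    injective pos /\
    (forall w u v, uedge a u v -> on_seg (pos w) (pos u) (pos v) ->
        w = u \/ w = v) /\
    (forall u v x y (p : R * R), uedge a u v -> uedge a x y ->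
        ~ ((x == u) && (y == v) || (x == v) && (y == u)) ->
        on_seg p (pos u) (pos v) -> on_seg p (pos x) (pos y) ->
        exists w, p = pos w /\ (w = u \/ w = v) /\ (w = x \/ w = y)).

Local Close Scope ring_scope.

(* Vertex x_i is represented by the ordinal i-1 : 'I_8. *)
Definition B0_arcs : seq (nat * nat) :=
  [:: (4,3); (5,3); (6,3); (3,0); (3,1); (3,2); (0,1); (1,2); (4,5); (5,6);
      (7,0); (7,1); (7,2); (7,3); (7,4); (7,5); (7,6)].

Definition B0 : rel 'I_8 := fun u v => (nat_of_ord u, nat_of_ord v) \in B0_arcs.

(* Main.v *)
Require Import Defs.
From mathcomp Require Import all_boot all_order all_algebra.
From mathcomp Require Import ring lra.
Set Implicit Arguments. Unset Strict Implicit.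
Import Order.TTheory GRing.Theory Num.Theory.

Local Open Scope ring_scope.


Definition posn (R : realFieldType) (n : nat) : R * R :=
  match n with
  | 0%N => (1, 0) | 1%N => (2, 0) | 2%N => (3, 0) | 3%N => (0, 1)
  | 4%N => (4, 0) | 5%N => (5, 0) | 6%N => (6, 0) | _ => (0, -1) end.
Arguments posn {R} n.

Definition Pn (R : realFieldType) (a b c d : nat) := forall p : R * R,
  on_seg p (posn a) (posn b) -> on_seg p (posn c) (posn d) ->
  exists k, (k = a \/ k = b) /\ (k = c \/ k = d) /\ p = posn k.

Arguments Pn {R} a b c d.
Lemma on_seg_sym (R : realFieldType) (p q r : R * R) : on_seg p q r -> on_seg p r q.
Proof.
case=> t [/andP [t0 t1] [e1 e2]]; rewrite /on_seg e1 e2; exists (1 - t).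
split; first by apply/andP; split; lra.
by split; ring.
Qed.

Lemma Pn_swap R a b c d : @Pn R a b c d -> @Pn R c d a b.
Proof. move=> H p s1 s2; case: (H p s2 s1) => k [h1 [h2 h3]]; by exists k. Qed.
Lemma Pn_rev1 R a b c d : @Pn R a b c d -> @Pn R b a c d.
Proof.
move=> H p s1 s2; case: (H p (on_seg_sym s1) s2) => k [h1 [h2 h3]]; exists k.
by split; first case: h1; auto.
Qed.
Lemma Pn_rev2 R a b c d : @Pn R a b c d -> @Pn R a b d c.
Proof. by move=> H; apply: Pn_swap; apply: Pn_rev1; apply: Pn_swap. Qed.

Definition En (i : nat) := nth (0, 0)%N B0_arcs i.

Ltac coords := apply: injective_projections => /=; lra.
Ltac leaf a b := move=> p [t [/andP [t0 t1] /= [e1 e2]]] [s [/andP [s0 s1] /= [f1 f2]]];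
  first [ (exists a; split; [by [left|right] | split; [by [left|right] | coords]])
        | (exists b; split; [by [left|right] | split; [by [left|right] | coords]])
        | (exfalso; lra) ].

Lemma Q_0_1 (R : realFieldType) : @Pn R 4 3 5 3.
Proof. leaf 4%N 3%N. Qed.

Lemma Q_0_2 (R : realFieldType) : @Pn R 4 3 6 3.
Proof. leaf 4%N 3%N. Qed.

Lemma Q_0_3 (R : realFieldType) : @Pn R 4 3 3 0.
Proof. leaf 4%N 3%N. Qed.

Lemma Q_0_4 (R : realFieldType) : @Pn R 4 3 3 1.
Proof. leaf 4%N 3%N. Qed.

Lemma Q_0_5 (R : realFieldType) : @Pn R 4 3 3 2.
Proof. leaf 4%N 3%N. Qed.

Lemma Q_0_6 (R : realFieldType) : @Pn R 4 3 0 1.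
Proof. leaf 4%N 3%N. Qed.

Lemma Q_0_7 (R : realFieldType) : @Pn R 4 3 1 2.
Proof. leaf 4%N 3%N. Qed.

Lemma Q_0_8 (R : realFieldType) : @Pn R 4 3 4 5.
Proof. leaf 4%N 3%N. Qed.

Lemma Q_0_9 (R : realFieldType) : @Pn R 4 3 5 6.
Proof. leaf 4%N 3%N. Qed.

Lemma Q_0_10 (R : realFieldType) : @Pn R 4 3 7 0.
Proof. leaf 4%N 3%N. Qed.

Lemma Q_0_11 (R : realFieldType) : @Pn R 4 3 7 1.
Proof. leaf 4%N 3%N. Qed.

Lemma Q_0_12 (R : realFieldType) : @Pn R 4 3 7 2.
Proof. leaf 4%N 3%N. Qed.

Lemma Q_0_13 (R : realFieldType) : @Pn R 4 3 7 3.
Proof. leaf 4%N 3%N. Qed.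

Lemma Q_0_14 (R : realFieldType) : @Pn R 4 3 7 4.
Proof. leaf 4%N 3%N. Qed.

Lemma Q_0_15 (R : realFieldType) : @Pn R 4 3 7 5.
Proof. leaf 4%N 3%N. Qed.

Lemma Q_0_16 (R : realFieldType) : @Pn R 4 3 7 6.
Proof. leaf 4%N 3%N. Qed.

Lemma Q_1_2 (R : realFieldType) : @Pn R 5 3 6 3.
Proof. leaf 5%N 3%N. Qed.

Lemma Q_1_3 (R : realFieldType) : @Pn R 5 3 3 0.
Proof. leaf 5%N 3%N. Qed.

Lemma Q_1_4 (R : realFieldType) : @Pn R 5 3 3 1.
Proof. leaf 5%N 3%N. Qed.

Lemma Q_1_5 (R : realFieldType) : @Pn R 5 3 3 2.
Proof. leaf 5%N 3%N. Qed.

Lemma Q_1_6 (R : realFieldType) : @Pn R 5 3 0 1.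
Proof. leaf 5%N 3%N. Qed.

Lemma Q_1_7 (R : realFieldType) : @Pn R 5 3 1 2.
Proof. leaf 5%N 3%N. Qed.

Lemma Q_1_8 (R : realFieldType) : @Pn R 5 3 4 5.
Proof. leaf 5%N 3%N. Qed.

Lemma Q_1_9 (R : realFieldType) : @Pn R 5 3 5 6.
Proof. leaf 5%N 3%N. Qed.

Lemma Q_1_10 (R : realFieldType) : @Pn R 5 3 7 0.
Proof. leaf 5%N 3%N. Qed.

Lemma Q_1_11 (R : realFieldType) : @Pn R 5 3 7 1.
Proof. leaf 5%N 3%N. Qed.

Lemma Q_1_12 (R : realFieldType) : @Pn R 5 3 7 2.
Proof. leaf 5%N 3%N. Qed.

Lemma Q_1_13 (R : realFieldType) : @Pn R 5 3 7 3.
Proof. leaf 5%N 3%N. Qed.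

Lemma Q_1_14 (R : realFieldType) : @Pn R 5 3 7 4.
Proof. leaf 5%N 3%N. Qed.

Lemma Q_1_15 (R : realFieldType) : @Pn R 5 3 7 5.
Proof. leaf 5%N 3%N. Qed.

Lemma Q_1_16 (R : realFieldType) : @Pn R 5 3 7 6.
Proof. leaf 5%N 3%N. Qed.

Lemma Q_2_3 (R : realFieldType) : @Pn R 6 3 3 0.
Proof. leaf 6%N 3%N. Qed.

Lemma Q_2_4 (R : realFieldType) : @Pn R 6 3 3 1.
Proof. leaf 6%N 3%N. Qed.

Lemma Q_2_5 (R : realFieldType) : @Pn R 6 3 3 2.
Proof. leaf 6%N 3%N. Qed.

Lemma Q_2_6 (R : realFieldType) : @Pn R 6 3 0 1.
Proof. leaf 6%N 3%N. Qed.

Lemma Q_2_7 (R : realFieldType) : @Pn R 6 3 1 2.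
Proof. leaf 6%N 3%N. Qed.

Lemma Q_2_8 (R : realFieldType) : @Pn R 6 3 4 5.
Proof. leaf 6%N 3%N. Qed.

Lemma Q_2_9 (R : realFieldType) : @Pn R 6 3 5 6.
Proof. leaf 6%N 3%N. Qed.

Lemma Q_2_10 (R : realFieldType) : @Pn R 6 3 7 0.
Proof. leaf 6%N 3%N. Qed.

Lemma Q_2_11 (R : realFieldType) : @Pn R 6 3 7 1.
Proof. leaf 6%N 3%N. Qed.

Lemma Q_2_12 (R : realFieldType) : @Pn R 6 3 7 2.
Proof. leaf 6%N 3%N. Qed.

Lemma Q_2_13 (R : realFieldType) : @Pn R 6 3 7 3.
Proof. leaf 6%N 3%N. Qed.

Lemma Q_2_14 (R : realFieldType) : @Pn R 6 3 7 4.
Proof. leaf 6%N 3%N. Qed.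

Lemma Q_2_15 (R : realFieldType) : @Pn R 6 3 7 5.
Proof. leaf 6%N 3%N. Qed.

Lemma Q_2_16 (R : realFieldType) : @Pn R 6 3 7 6.
Proof. leaf 6%N 3%N. Qed.

Lemma Q_3_4 (R : realFieldType) : @Pn R 3 0 3 1.
Proof. leaf 3%N 0%N. Qed.

Lemma Q_3_5 (R : realFieldType) : @Pn R 3 0 3 2.
Proof. leaf 3%N 0%N. Qed.

Lemma Q_3_6 (R : realFieldType) : @Pn R 3 0 0 1.
Proof. leaf 3%N 0%N. Qed.

Lemma Q_3_7 (R : realFieldType) : @Pn R 3 0 1 2.
Proof. leaf 3%N 0%N. Qed.

Lemma Q_3_8 (R : realFieldType) : @Pn R 3 0 4 5.
Proof. leaf 3%N 0%N. Qed.

Lemma Q_3_9 (R : realFieldType) : @Pn R 3 0 5 6.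
Proof. leaf 3%N 0%N. Qed.

Lemma Q_3_10 (R : realFieldType) : @Pn R 3 0 7 0.
Proof. leaf 3%N 0%N. Qed.

Lemma Q_3_11 (R : realFieldType) : @Pn R 3 0 7 1.
Proof. leaf 3%N 0%N. Qed.

Lemma Q_3_12 (R : realFieldType) : @Pn R 3 0 7 2.
Proof. leaf 3%N 0%N. Qed.

Lemma Q_3_13 (R : realFieldType) : @Pn R 3 0 7 3.
Proof. leaf 3%N 0%N. Qed.

Lemma Q_3_14 (R : realFieldType) : @Pn R 3 0 7 4.
Proof. leaf 3%N 0%N. Qed.

Lemma Q_3_15 (R : realFieldType) : @Pn R 3 0 7 5.
Proof. leaf 3%N 0%N. Qed.

Lemma Q_3_16 (R : realFieldType) : @Pn R 3 0 7 6.
Proof. leaf 3%N 0%N. Qed.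

Lemma Q_4_5 (R : realFieldType) : @Pn R 3 1 3 2.
Proof. leaf 3%N 1%N. Qed.

Lemma Q_4_6 (R : realFieldType) : @Pn R 3 1 0 1.
Proof. leaf 3%N 1%N. Qed.

Lemma Q_4_7 (R : realFieldType) : @Pn R 3 1 1 2.
Proof. leaf 3%N 1%N. Qed.

Lemma Q_4_8 (R : realFieldType) : @Pn R 3 1 4 5.
Proof. leaf 3%N 1%N. Qed.

Lemma Q_4_9 (R : realFieldType) : @Pn R 3 1 5 6.
Proof. leaf 3%N 1%N. Qed.

Lemma Q_4_10 (R : realFieldType) : @Pn R 3 1 7 0.
Proof. leaf 3%N 1%N. Qed.

Lemma Q_4_11 (R : realFieldType) : @Pn R 3 1 7 1.
Proof. leaf 3%N 1%N. Qed.

Lemma Q_4_12 (R : realFieldType) : @Pn R 3 1 7 2.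
Proof. leaf 3%N 1%N. Qed.

Lemma Q_4_13 (R : realFieldType) : @Pn R 3 1 7 3.
Proof. leaf 3%N 1%N. Qed.

Lemma Q_4_14 (R : realFieldType) : @Pn R 3 1 7 4.
Proof. leaf 3%N 1%N. Qed.

Lemma Q_4_15 (R : realFieldType) : @Pn R 3 1 7 5.
Proof. leaf 3%N 1%N. Qed.

Lemma Q_4_16 (R : realFieldType) : @Pn R 3 1 7 6.
Proof. leaf 3%N 1%N. Qed.

Lemma Q_5_6 (R : realFieldType) : @Pn R 3 2 0 1.
Proof. leaf 3%N 2%N. Qed.

Lemma Q_5_7 (R : realFieldType) : @Pn R 3 2 1 2.
Proof. leaf 3%N 2%N. Qed.

Lemma Q_5_8 (R : realFieldType) : @Pn R 3 2 4 5.
Proof. leaf 3%N 2%N. Qed.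

Lemma Q_5_9 (R : realFieldType) : @Pn R 3 2 5 6.
Proof. leaf 3%N 2%N. Qed.

Lemma Q_5_10 (R : realFieldType) : @Pn R 3 2 7 0.
Proof. leaf 3%N 2%N. Qed.

Lemma Q_5_11 (R : realFieldType) : @Pn R 3 2 7 1.
Proof. leaf 3%N 2%N. Qed.

Lemma Q_5_12 (R : realFieldType) : @Pn R 3 2 7 2.
Proof. leaf 3%N 2%N. Qed.

Lemma Q_5_13 (R : realFieldType) : @Pn R 3 2 7 3.
Proof. leaf 3%N 2%N. Qed.

Lemma Q_5_14 (R : realFieldType) : @Pn R 3 2 7 4.
Proof. leaf 3%N 2%N. Qed.

Lemma Q_5_15 (R : realFieldType) : @Pn R 3 2 7 5.
Proof. leaf 3%N 2%N. Qed.

Lemma Q_5_16 (R : realFieldType) : @Pn R 3 2 7 6.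
Proof. leaf 3%N 2%N. Qed.

Lemma Q_6_7 (R : realFieldType) : @Pn R 0 1 1 2.
Proof. leaf 0%N 1%N. Qed.

Lemma Q_6_8 (R : realFieldType) : @Pn R 0 1 4 5.
Proof. leaf 0%N 1%N. Qed.

Lemma Q_6_9 (R : realFieldType) : @Pn R 0 1 5 6.
Proof. leaf 0%N 1%N. Qed.

Lemma Q_6_10 (R : realFieldType) : @Pn R 0 1 7 0.
Proof. leaf 0%N 1%N. Qed.

Lemma Q_6_11 (R : realFieldType) : @Pn R 0 1 7 1.
Proof. leaf 0%N 1%N. Qed.

Lemma Q_6_12 (R : realFieldType) : @Pn R 0 1 7 2.
Proof. leaf 0%N 1%N. Qed.

Lemma Q_6_13 (R : realFieldType) : @Pn R 0 1 7 3.
Proof. leaf 0%N 1%N. Qed.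

Lemma Q_6_14 (R : realFieldType) : @Pn R 0 1 7 4.
Proof. leaf 0%N 1%N. Qed.

Lemma Q_6_15 (R : realFieldType) : @Pn R 0 1 7 5.
Proof. leaf 0%N 1%N. Qed.

Lemma Q_6_16 (R : realFieldType) : @Pn R 0 1 7 6.
Proof. leaf 0%N 1%N. Qed.

Lemma Q_7_8 (R : realFieldType) : @Pn R 1 2 4 5.
Proof. leaf 1%N 2%N. Qed.

Lemma Q_7_9 (R : realFieldType) : @Pn R 1 2 5 6.
Proof. leaf 1%N 2%N. Qed.

Lemma Q_7_10 (R : realFieldType) : @Pn R 1 2 7 0.
Proof. leaf 1%N 2%N. Qed.

Lemma Q_7_11 (R : realFieldType) : @Pn R 1 2 7 1.
Proof. leaf 1%N 2%N. Qed.

Lemma Q_7_12 (R : realFieldType) : @Pn R 1 2 7 2.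
Proof. leaf 1%N 2%N. Qed.

Lemma Q_7_13 (R : realFieldType) : @Pn R 1 2 7 3.
Proof. leaf 1%N 2%N. Qed.

Lemma Q_7_14 (R : realFieldType) : @Pn R 1 2 7 4.
Proof. leaf 1%N 2%N. Qed.

Lemma Q_7_15 (R : realFieldType) : @Pn R 1 2 7 5.
Proof. leaf 1%N 2%N. Qed.

Lemma Q_7_16 (R : realFieldType) : @Pn R 1 2 7 6.
Proof. leaf 1%N 2%N. Qed.

Lemma Q_8_9 (R : realFieldType) : @Pn R 4 5 5 6.
Proof. leaf 4%N 5%N. Qed.

Lemma Q_8_10 (R : realFieldType) : @Pn R 4 5 7 0.
Proof. leaf 4%N 5%N. Qed.

Lemma Q_8_11 (R : realFieldType) : @Pn R 4 5 7 1.
Proof. leaf 4%N 5%N. Qed.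

Lemma Q_8_12 (R : realFieldType) : @Pn R 4 5 7 2.
Proof. leaf 4%N 5%N. Qed.

Lemma Q_8_13 (R : realFieldType) : @Pn R 4 5 7 3.
Proof. leaf 4%N 5%N. Qed.

Lemma Q_8_14 (R : realFieldType) : @Pn R 4 5 7 4.
Proof. leaf 4%N 5%N. Qed.

Lemma Q_8_15 (R : realFieldType) : @Pn R 4 5 7 5.
Proof. leaf 4%N 5%N. Qed.

Lemma Q_8_16 (R : realFieldType) : @Pn R 4 5 7 6.
Proof. leaf 4%N 5%N. Qed.

Lemma Q_9_10 (R : realFieldType) : @Pn R 5 6 7 0.
Proof. leaf 5%N 6%N. Qed.

Lemma Q_9_11 (R : realFieldType) : @Pn R 5 6 7 1.
Proof. leaf 5%N 6%N. Qed.

Lemma Q_9_12 (R : realFieldType) : @Pn R 5 6 7 2.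
Proof. leaf 5%N 6%N. Qed.

Lemma Q_9_13 (R : realFieldType) : @Pn R 5 6 7 3.
Proof. leaf 5%N 6%N. Qed.

Lemma Q_9_14 (R : realFieldType) : @Pn R 5 6 7 4.
Proof. leaf 5%N 6%N. Qed.

Lemma Q_9_15 (R : realFieldType) : @Pn R 5 6 7 5.
Proof. leaf 5%N 6%N. Qed.

Lemma Q_9_16 (R : realFieldType) : @Pn R 5 6 7 6.
Proof. leaf 5%N 6%N. Qed.

Lemma Q_10_11 (R : realFieldType) : @Pn R 7 0 7 1.
Proof. leaf 7%N 0%N. Qed.

Lemma Q_10_12 (R : realFieldType) : @Pn R 7 0 7 2.
Proof. leaf 7%N 0%N. Qed.

Lemma Q_10_13 (R : realFieldType) : @Pn R 7 0 7 3.
Proof. leaf 7%N 0%N. Qed.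

Lemma Q_10_14 (R : realFieldType) : @Pn R 7 0 7 4.
Proof. leaf 7%N 0%N. Qed.

Lemma Q_10_15 (R : realFieldType) : @Pn R 7 0 7 5.
Proof. leaf 7%N 0%N. Qed.

Lemma Q_10_16 (R : realFieldType) : @Pn R 7 0 7 6.
Proof. leaf 7%N 0%N. Qed.

Lemma Q_11_12 (R : realFieldType) : @Pn R 7 1 7 2.
Proof. leaf 7%N 1%N. Qed.

Lemma Q_11_13 (R : realFieldType) : @Pn R 7 1 7 3.
Proof. leaf 7%N 1%N. Qed.

Lemma Q_11_14 (R : realFieldType) : @Pn R 7 1 7 4.
Proof. leaf 7%N 1%N. Qed.

Lemma Q_11_15 (R : realFieldType) : @Pn R 7 1 7 5.
Proof. leaf 7%N 1%N. Qed.

Lemma Q_11_16 (R : realFieldType) : @Pn R 7 1 7 6.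
Proof. leaf 7%N 1%N. Qed.

Lemma Q_12_13 (R : realFieldType) : @Pn R 7 2 7 3.
Proof. leaf 7%N 2%N. Qed.

Lemma Q_12_14 (R : realFieldType) : @Pn R 7 2 7 4.
Proof. leaf 7%N 2%N. Qed.

Lemma Q_12_15 (R : realFieldType) : @Pn R 7 2 7 5.
Proof. leaf 7%N 2%N. Qed.

Lemma Q_12_16 (R : realFieldType) : @Pn R 7 2 7 6.
Proof. leaf 7%N 2%N. Qed.

Lemma Q_13_14 (R : realFieldType) : @Pn R 7 3 7 4.
Proof. leaf 7%N 3%N. Qed.

Lemma Q_13_15 (R : realFieldType) : @Pn R 7 3 7 5.
Proof. leaf 7%N 3%N. Qed.

Lemma Q_13_16 (R : realFieldType) : @Pn R 7 3 7 6.
Proof. leaf 7%N 3%N. Qed.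

Lemma Q_14_15 (R : realFieldType) : @Pn R 7 4 7 5.
Proof. leaf 7%N 4%N. Qed.

Lemma Q_14_16 (R : realFieldType) : @Pn R 7 4 7 6.
Proof. leaf 7%N 4%N. Qed.

Lemma Q_15_16 (R : realFieldType) : @Pn R 7 5 7 6.
Proof. leaf 7%N 5%N. Qed.

Lemma allQ (R : realFieldType) (i j : nat) : (i < 17)%N -> (j < 17)%N -> (i < j)%N ->
  @Pn R (En i).1 (En i).2 (En j).1 (En j).2.
Proof.
case: i => [|[|[|[|[|[|[|[|[|[|[|[|[|[|[|[|[|i]]]]]]]]]]]]]]]]];
case: j => [|[|[|[|[|[|[|[|[|[|[|[|[|[|[|[|[|j]]]]]]]]]]]]]]]]]; move=> h1 h2 h3; try (by case: h1); try (by case: h2); try (by case: h3).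
all: rewrite /En /=.
all: first [ exact: Q_0_1 | exact: Q_0_2 | exact: Q_0_3 | exact: Q_0_4 | exact: Q_0_5 | exact: Q_0_6 | exact: Q_0_7 | exact: Q_0_8 | exact: Q_0_9 | exact: Q_0_10 | exact: Q_0_11 | exact: Q_0_12 | exact: Q_0_13 | exact: Q_0_14 | exact: Q_0_15 | exact: Q_0_16 | exact: Q_1_2 | exact: Q_1_3 | exact: Q_1_4 | exact: Q_1_5 | exact: Q_1_6 | exact: Q_1_7 | exact: Q_1_8 | exact: Q_1_9 | exact: Q_1_10 | exact: Q_1_11 | exact: Q_1_12 | exact: Q_1_13 | exact: Q_1_14 | exact: Q_1_15 | exact: Q_1_16 | exact: Q_2_3 | exact: Q_2_4 | exact: Q_2_5 | exact: Q_2_6 | exact: Q_2_7 | exact: Q_2_8 | exact: Q_2_9 | exact: Q_2_10 | exact: Q_2_11 | exact: Q_2_12 | exact: Q_2_13 | exact: Q_2_14 | exact: Q_2_15 | exact: Q_2_16 | exact: Q_3_4 | exact: Q_3_5 | exact: Q_3_6 | exact: Q_3_7 | exact: Q_3_8 | exact: Q_3_9 | exact: Q_3_10 | exact: Q_3_11 | exact: Q_3_12 | exact: Q_3_13 | exact: Q_3_14 | exact: Q_3_15 | exact: Q_3_16 | exact: Q_4_5 | exact: Q_4_6 | exact: Q_4_7 | exact: Q_4_8 | exact: Q_4_9 | exact: Q_4_10 | exact: Q_4_11 | exact: Q_4_12 | exact: Q_4_13 | exact: Q_4_14 | exact: Q_4_15 | exact: Q_4_16 | exact: Q_5_6 | exact: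 Q_5_7 | exact: Q_5_8 | exact: Q_5_9 | exact: Q_5_10 | exact: Q_5_11 | exact: Q_5_12 | exact: Q_5_13 | exact: Q_5_14 | exact: Q_5_15 | exact: Q_5_16 | exact: Q_6_7 | exact: Q_6_8 | exact: Q_6_9 | exact: Q_6_10 | exact: Q_6_11 | exact: Q_6_12 | exact: Q_6_13 | exact: Q_6_14 | exact: Q_6_15 | exact: Q_6_16 | exact: Q_7_8 | exact: Q_7_9 | exact: Q_7_10 | exact: Q_7_11 | exact: Q_7_12 | exact: Q_7_13 | exact: Q_7_14 | exact: Q_7_15 | exact: Q_7_16 | exact: Q_8_9 | exact: Q_8_10 | exact: Q_8_11 | exact: Q_8_12 | exact: Q_8_13 | exact: Q_8_14 | exact: Q_8_15 | exact: Q_8_16 | exact: Q_9_10 | exact: Q_9_11 | exact: Q_9_12 | exact: Q_9_13 | exact: Q_9_14 | exact: Q_9_15 | exact: Q_9_16 | exact: Q_10_11 | exact: Q_10_12 | exact: Q_10_13 | exact: Q_10_14 | exact: Q_10_15 | exact: Q_10_16 | exact: Q_11_12 | exact: Q_11_13 | exact: Q_11_14 | exact: Q_11_15 | exact: Q_11_16 | exact: Q_12_13 | exact: Q_12_14 | exact: Q_12_15 | exact: Q_12_16 | exact: Q_13_14 | exact: Q_13_15 | exact: Q_13_16 | exact: Q_14_15 | exact: Q_14_16 | exact: Q_15_16 ].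
Qed.

Lemma PnE (R : realFieldType) (i j : nat) : (i < 17)%N -> (j < 17)%N -> i != j ->
  @Pn R (En i).1 (En i).2 (En j).1 (En j).2.
Proof.
move=> hi hj; case: (ltngtP i j) => // h _.
  exact: allQ.
by apply: Pn_swap; apply: allQ.
Qed.

Lemma Pn_or (R : realFieldType) a b c d i j : (i < 17)%N -> (j < 17)%N -> i != j ->
  (En i = (a, b) \/ En i = (b, a)) -> (En j = (c, d) \/ En j = (d, c)) -> @Pn R a b c d.
Proof.
move=> hi hj hij h1 h2; have := @PnE R _ _ hi hj hij.
case: h1 => ->; case: h2 => -> /= H.
- exact H.
- exact: Pn_rev2.
- exact: Pn_rev1.
- exact: Pn_rev1 (Pn_rev2 H).
Qed.


Local Close Scope ring_scope.

Definition B0n (u v : nat) := (u, v) \in B0_arcs.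
Definition pn (m : nat -> bool) (u v : nat) :=
  if m u (+) m v then B0n v u else B0n u v.
Definition goodn (m : nat -> bool) := all (fun u => all (fun v => (u != v) ==>
  [|| pn m u v, pn m v u | has (fun w => (pn m u w && pn m w v) || (pn m v w && pn m w u)) (iota 0 8)]) (iota 0 8)) (iota 0 8).

Lemma all_good b0 b1 b2 b3 b4 b5 b6 b7 :
  goodn (nth false [:: b0; b1; b2; b3; b4; b5; b6; b7]).
Proof.
move: b0 b1 b2 b3 b4 b5 b6 b7.
by do 8 case; vm_compute.
Qed.

Lemma part3 (S : {set 'I_8}) (W : Type) (b : W -> W -> Prop) :
     oriented b -> forall phi : 'I_8 -> W, or_hom (push B0 S) b phi ->
     injective phi.
Proof.
move=> [bl ba] phi hom.
set m := nth false [:: inord 0 \in S; inord 1 \in S; inord 2 \in S; inord 3 \in S;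
   inord 4 \in S; inord 5 \in S; inord 6 \in S; inord 7 \in S].
have em : forall u : 'I_8, m u = (u \in S).
  move=> u; have -> : u = inord u by rewrite inord_val.
  by case: u => [[|[|[|[|[|[|[|[|u]]]]]]]] Hu] //=; rewrite /m /= inordK.
have ep : forall u v : 'I_8, pn m u v = push B0 S u v.
  by move=> u v; rewrite /pn /push !em.
have G := all_good (inord 0 \in S) (inord 1 \in S) (inord 2 \in S) (inord 3 \in S)
   (inord 4 \in S) (inord 5 \in S) (inord 6 \in S) (inord 7 \in S).
fold m in G.
move=> u v e; apply/eqP; apply: contraT => nuv.
have nuv' : (val u != val v) by [].
move/allP: G => /(_ (val u)); rewrite mem_iota ltn_ord => /(_ isT).
move/allP => /(_ (val v)); rewrite mem_iota ltn_ord => /(_ isT).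
rewrite nuv' implyTb !ep.
case/or3P.
- by move/hom; rewrite e => h; case: (bl _ h).
- by move/hom; rewrite e => h; case: (bl _ h).
move/seq.hasP=> [w]; rewrite mem_iota /= => hw.
pose w' := Ordinal hw.
have -> : w = val w' by [].
rewrite !ep; case/orP => /andP [h1 h2].
- by move: (hom _ _ h1) (hom _ _ h2); rewrite e => h h'; case: (ba _ _ h h').
- by move: (hom _ _ h1) (hom _ _ h2); rewrite e => h h'; case: (ba _ _ h h').
Qed.

Ltac ocase u := let H := fresh "H" in
  case: u => [[|[|[|[|[|[|[|[|u]]]]]]]] H]; last by [].

Definition pos (R : realFieldType) (i : 'I_8) : R * R := posn (val i).
Arguments pos {R} i.

Lemma inj_pos (R : realFieldType) : injective (@pos R).
Proof.
move=> u v; ocase u; ocase v; rewrite /pos /= => E;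
  first [ by apply: val_inj | (move: (congr1 fst E) (congr1 snd E) => /= E1 E2; clear E; exfalso; lra) ].
Qed.

Lemma edge_idx (u v : 'I_8) : uedge B0 u v ->
  exists i, (i < 17)%N /\ (En i = (val u, val v) \/ En i = (val v, val u)).
Proof.
rewrite /uedge /B0 => /orP [h|h].
  exists (index (val u, val v) B0_arcs); split; first by rewrite -[17%N]/(size B0_arcs) index_mem.
  by left; rewrite /En nth_index.
exists (index (val v, val u) B0_arcs); split; first by rewrite -[17%N]/(size B0_arcs) index_mem.
by right; rewrite /En nth_index.
Qed.

Lemma cond3 (R : realFieldType) : forall u v x y (p : R * R), uedge B0 u v -> uedge B0 x y ->
        ~ ((x == u) && (y == v) || (x == v) && (y == u)) ->
        on_seg p (pos u) (pos v) -> on_seg p (pos x) (pos y) ->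
        exists w, p = pos w /\ (w = u \/ w = v) /\ (w = x \/ w = y).
Proof.
move=> u v x y p e1 e2 hneq s1 s2.
have [i [hi Ei]] := edge_idx e1; have [j [hj Ej]] := edge_idx e2.
case: (eqVneq i j) => [eij | nij].
  exfalso; apply: hneq; subst j; move: Ej; case: Ei => ->; case=> h; case: h => /val_inj h1 /val_inj h2; subst;
  by rewrite !eqxx ?orbT.
have [k [hk1 [hk2 hp]]] := @Pn_or R _ _ _ _ _ _ hi hj nij Ei Ej p s1 s2.
case: hk1 => hk; subst k.
  exists u; split => //; split; first by left.
  by case: hk2 => /val_inj ->; [left|right].
exists v; split => //; split; first by right.
by case: hk2 => /val_inj ->; [left|right].
Qed.

Lemma has_nb (w : 'I_8) : exists z, uedge B0 w z.
Proof.
exists (if val w == 7%N then (ord0 : 'I_8) else (ord_max : 'I_8)).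
by ocase w.
Qed.

Lemma planarB0 (R : realFieldType) : planar R B0.
Proof.
exists pos; split; first exact: inj_pos.
split; last exact: cond3.
move=> w u v e s.
have [z ez] := has_nb w.
have s' : on_seg (pos w) (pos w) (@pos R z).
  by exists 0%R; split; [apply/andP; split; lra | rewrite !mul0r !addr0].
case: (boolP ((w == u) && (z == v) || (w == v) && (z == u))).
  by case/orP => /andP [/eqP -> _]; [left|right].
move=> /negP hn.
have [k [hk [hk1 _]]] := cond3 e ez hn s s'.
by move/inj_pos: hk => ->.
Qed.

Lemma orB0 : oriented (fun u v : 'I_8 => B0 u v).
Proof.
split.
  by move=> x; ocase x.
by move=> x y; ocase x; ocase y.
Qed.

Lemma col8 : push_colorable B0 8.
Proof.
exists set0, B0, id; split; first exact: orB0.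
by move=> u v; rewrite /push !inE.
Qed.

Theorem mainTheorem9 :
  (forall R : realFieldType, planar R B0) /\
  is_push_chromatic_number B0 8 /\
  (forall (S : {set 'I_8}) (W : Type) (b : W -> W -> Prop),
     oriented b -> forall phi : 'I_8 -> W, or_hom (push B0 S) b phi ->
     injective phi).
Proof.
split; first exact: planarB0.
split; last exact: part3.
split; first exact: col8.
move=> k [S [b [phi [ob hom]]]].
have := @leq_card _ _ phi (part3 ob hom).
by rewrite !card_ord.
Qed.
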